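(* Let $M_\sharp=X_\sharp X_\sharp^\top$ with $X_\sharp\in\mathbb{R}^{d\times r}$ of rank $r$, let $\mathcal{A}\colon\mathbb{R}^{d\times d}\to\mathbb{R}^m$ be linear and $b\in\mathbb{R}^m$. Suppose there exist a set $\mathcal{I}\subset\{1,\dots,m\}$ and a constant $\kappa_3>0$ such that (i) $b_i=\mathcal{A}(M_\sharp)_i$ for all $i\notin\mathcal{I}$, and (ii) for every $W\in\mathbb{R}^{d\times d}$ of rank at most $2r$, $$\kappa_3\|W\|_F\le\frac1m\|\mathcal{A}_{\mathcal{I}^c}(W)\|_1-\frac1m\|\mathcal{A}_{\mathcal{I}}(W)\|_1.$$ Let $f(X)=\frac1m\|\mathcal{A}(XX^\top)-b\|_1$ for $X\in\mathbb{R}^{d\times r}$. Then for all $X\in\mathbb{R}^{d\times r}$, $$f(X)-f(X_\sharp)\ge\kappa_3\sqrt{2(\sqrt2-1)}\,\sigma_r(X_\sharp)\,\mathrm{dist}\big(X,\mathcal{D}^*(M_\sharp)\big).$$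
   Context: For $\mathcal{J}\subset\{1,\dots,m\}$, $\mathcal{A}_{\mathcal{J}}(W)=(\mathcal{A}(W)_i)_{i\in\mathcal{J}}$, and $\mathcal{I}^c$ is the complement of $\mathcal{I}$. $\mathcal{D}^*(M_\sharp)=\{X_\sharp R:R\in O(r)\}$, where $O(r)$ is the orthogonal group, and $\mathrm{dist}$ is Frobenius distance. $\sigma_r$ denotes the $r$-th largest singular value. *)

(* Defs.v *)
(* the reals are modelled by an arbitrary real closed field R. *)
From HB Require Import structures.
From mathcomp Require Import all_boot all_order all_algebra.
Set Implicit Arguments. Unset Strict Implicit. Unset Printing Implicit Defensive.
Import Order.TTheory GRing.Theory Num.Theory.
Local Open Scope ring_scope.

Definition frob (R : rcfType) (p q : nat) (W : 'M[R]_(p, q)) : R :=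
  Num.sqrt (\sum_(i < p) \sum_(j < q) W i j ^+ 2).

Definition l1_on (R : rcfType) (m : nat) (J : {set 'I_m}) (v : 'rV[R]_m) : R :=
  \sum_(i < m | i \in J) `|v 0 i|.

Definition orthogonal (R : rcfType) (r : nat) (Q : 'M[R]_r) : Prop :=
  Q^T *m Q = 1%:M.

(* s is sigma_r(X) for X : d x r, i.e. the r-th largest (= smallest) singular
   value: the square root of the smallest eigenvalue of the r x r Gram matrix X^T X. *)
Definition is_sigma_r (R : rcfType) (d r : nat) (X : 'M[R]_(d, r)) (s : R) : Prop :=
  exists lam : R, eigenvalue (X^T *m X) lam /\
    (forall mu : R, eigenvalue (X^T *m X) mu -> lam <= mu) /\
    s = Num.sqrt lam.

(* delta = dist(X, D^*(M)) = inf_{Q in O(r)} ||X - Xs Q||_F  (greatest lower bound). *)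
Definition is_dist_Dstar (R : rcfType) (d r : nat) (Xs X : 'M[R]_(d, r)) (delta : R) : Prop :=
  (forall Q : 'M[R]_r, orthogonal Q -> delta <= frob (X - Xs *m Q)) /\
  (forall e : R, (forall Q : 'M[R]_r, orthogonal Q -> e <= frob (X - Xs *m Q)) -> e <= delta).

Definition fobj (R : rcfType) (d r m : nat) (A : {linear 'M[R]_d -> 'rV[R]_m})
  (b : 'rV[R]_m) (X : 'M[R]_(d, r)) : R :=
  (m%:R)^-1 * l1_on [set: 'I_m] (A (X *m X^T) - b).

(* Main.v *)
Require Import Defs.
From HB Require Import structures.
From mathcomp Require Import all_boot all_order all_algebra.
From mathcomp Require Import sesquilinear spectral.
From mathcomp.real_closed Require Import complex.
From mathcomp Require Import ring lra.
Import Order.TTheory GRing.Theory Num.Theory.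
Set Implicit Arguments. Unset Strict Implicit. Unset Printing Implicit Defensive.
Local Open Scope ring_scope.

Lemma sym_eigen (R : rcfType) n (A : 'M[R]_n.+1) : A^T = A -> exists a, eigenvalue A a.
Proof.
move=> sA.
pose A' := map_mx (real_complex R) A.
have hA : A' \is hermsymmx.
  apply: realsym_hermsym.
    rewrite qualifE /=; apply/eqP; rewrite expr0 scale1r; apply/matrixP => i j.
    by rewrite !mxE -[in LHS]sA mxE.
  by apply/mxOverP => i j; rewrite /A' mxE complex_real.
have /hermitian_normalmx /orthomx_spectralP eA := hA.
have Dr := hermitian_spectral_diag_real hA.
set P := spectralmx A' in eA.
set D := spectral_diag A' in eA Dr.
have Pu : P \in unitmx by apply: spectral_unit.
have PA : P *m A' = diag_mx D *m P by rewrite {1}eA !mulmxA mulmxV // mul1mx.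
have ev : eigenvalue A' (D 0 0).
  apply/eigenvalueP; exists (row 0 P).
    by rewrite -row_mul PA; apply/rowP => j; rewrite !mxE (bigD1 0) //= mxE eqxx mulr1n big1 ?addr0 // => k nk; rewrite mxE eq_sym (negbTE nk) mulr0n mul0r.
  apply/negP => /eqP r0.
  move: Pu; rewrite unitmxE (expand_det_row _ 0) big1 ?unitr0 // => j _.
  by move/rowP: r0 => /(_ j); rewrite !mxE => ->; rewrite mul0r.
have /complex_realP [x ex] : D 0 0 \is Num.real by apply: (mxOverP Dr).
exists x; move: ev; rewrite ex !eigenvalue_root_char -map_char_poly.
by rewrite fmorph_root.
Qed.

Section H.
Variable R : rcfType.

Lemma dotE n (u v : 'rV[R]_n) : (u *m v^T) 0 0 = \sum_i u 0 i * v 0 i.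
Proof. by rewrite mxE; apply: eq_bigr => i _; rewrite mxE. Qed.

Lemma mx11E (M : 'M[R]_1) : M = (M 0 0)%:M.
Proof. by rewrite {1}[M]mx11_scalar. Qed.

Lemma refl_orth n (W : 'M[R]_n) k c : W^T = W -> W *m W = c *: W -> k * k * c = k + k ->
  (1%:M - k *: W)^T *m (1%:M - k *: W) = 1%:M.
Proof.
move=> WT WW kk.
have -> : (1%:M - k *: W)^T = 1%:M - k *: W.
  apply/matrixP => i j; rewrite !mxE eq_sym; congr (_ - _ * _); by rewrite -{2}WT mxE.
rewrite mulmxBl mul1mx mulmxBr mulmx1 -scalemxAl -scalemxAr.
by rewrite scalerA WW scalerA kk scalerDl opprB addrK subrK.
Qed.

Lemma householder n (v : 'rV[R]_n.+1) : v *m v^T = 1%:M ->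
  exists H : 'M[R]_n.+1, H^T *m H = 1%:M /\ row 0 H = v.
Proof.
move=> vv.
have vv1 : \sum_i v 0 i ^+ 2 = 1.
  have e : (1%:M : 'M[R]_1) 0 0 = 1 by rewrite mxE.
  rewrite -e -vv dotE.
  by apply: eq_bigr => i _; rewrite expr2.
pose e0 : 'rV[R]_n.+1 := delta_mx 0 0.
have [ve|vne] := eqVneq v e0.
  by exists 1%:M; rewrite trmx1 mulmx1 ve row1.
pose w := v - e0.
pose c := (w *m w^T) 0 0.
have wwc : w *m w^T = c%:M by apply: mx11E.
have cE : c = 2 - 2 * v 0 0.
  have h1 : c = (v 0 0 - 1) ^+ 2 + \sum_(i | i != 0) v 0 i ^+ 2.
    rewrite /c dotE (bigD1 0) //= /w !mxE eqxx /= expr2; congr (_ + _).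
    by apply: eq_bigr => i ni; rewrite /e0 !mxE (negbTE ni) andbF subr0 expr2.
  have h2 : 1 = v 0 0 ^+ 2 + \sum_(i | i != 0) v 0 i ^+ 2 by rewrite -vv1 (bigD1 0).
  rewrite h1; move: h2; set s := \sum_(i | _) _ => h2; rewrite -[s](addKr (v 0 0 ^+ 2)) -h2.
  ring.
have cne : c != 0.
  rewrite /c dotE; apply/negP => /eqP s0.
  have : forall i, w 0 i * w 0 i = 0.
    move=> i; apply/eqP; move/eqP: s0; rewrite psumr_eq0 => [/allP h|j _]; last by rewrite -expr2 sqr_ge0.
    by apply/eqP; have := h i; rewrite mem_index_enum => /(_ isT) /implyP /(_ isT) /eqP.
  move=> h; move/eqP: vne; apply; apply/eqP; rewrite -subr_eq0; apply/eqP/rowP => i.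
  by have := h i; move/eqP; rewrite mulf_eq0 orbb => /eqP; rewrite !mxE.
pose k := 2 / c.
pose H := 1%:M - k *: (w^T *m w).
have HT : H^T = H by rewrite /H linearB /= trmx1 linearZ /= trmx_mul trmxK.
have WW : (w^T *m w) *m (w^T *m w) = c *: (w^T *m w).
  by rewrite mulmxA -(mulmxA _ w) wwc mul_mx_scalar -scalemxAl.
have kk : k * k * c = k + k by rewrite /k; field.
exists H; split.
  apply: refl_orth kk; first by rewrite trmx_mul trmxK.
  exact: WW.
have kw : k * w 0 0 = -1.
  have w00 : w 0 0 = v 0 0 - 1 by rewrite /w !mxE.
  have hc : c = -2 * w 0 0 by rewrite cE w00; ring.
  by move: cne; rewrite /k hc => cne; field; move: cne; rewrite mulf_eq0 negb_or => /andP[].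
have kv : k * (v 0 0 - 1) = -1.
  have w00 : w 0 0 = v 0 0 - 1 by rewrite /w !mxE.
  by rewrite -w00.
apply/rowP => j; rewrite !mxE big_ord1 !mxE !eqxx /= mulr1n mulrA kv.
have o0 : (ord0 : 'I_1) = 0 by apply/val_inj.
by case: (eqVneq j 0) => [->|nj] /=; rewrite o0; ring.
Qed.

Lemma sq_ge0 n (u : 'rV[R]_n) : 0 <= (u *m u^T) 0 0.
Proof. by rewrite dotE sumr_ge0 // => i _; rewrite -expr2 sqr_ge0. Qed.

Lemma sq_eq0 n (u : 'rV[R]_n) : (u *m u^T) 0 0 = 0 -> u = 0.
Proof.
rewrite dotE => s0; apply/rowP => i; rewrite mxE.
have pos : forall j, predT j -> 0 <= u 0 j * u 0 j by move=> j _; rewrite -expr2 sqr_ge0.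
have := psumr_eq0P pos s0 (i := i) isT.
by move/eqP; rewrite mulf_eq0 orbb => /eqP.
Qed.

Lemma normalize n (v : 'rV[R]_n) : v != 0 ->
  exists t, 0 < t /\ (t *: v) *m (t *: v)^T = 1%:M.
Proof.
move=> vn; set c := (v *m v^T) 0 0.
have cp : 0 < c by rewrite lt_def sq_ge0 andbT; apply/eqP => /sq_eq0 h; rewrite h eqxx in vn.
have sp : 0 < Num.sqrt c by rewrite sqrtr_gt0.
exists (Num.sqrt c)^-1; split; first by rewrite invr_gt0.
rewrite linearZ /= -scalemxAl -scalemxAr scalerA [v *m _]mx11E -/c.
rewrite scale_scalar_mx; congr (_%:M).
by rewrite -invfM -expr2 sqr_sqrtr ?ltW // mulVf // gt_eqF.
Qed.

Lemma orthT n (Q : 'M[R]_n) : Q^T *m Q = 1%:M -> Q *m Q^T = 1%:M.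
Proof. exact: mulmx1C. Qed.

Lemma orth_tr n (Q : 'M[R]_n) : Q^T *m Q = 1%:M -> Q^T^T *m Q^T = 1%:M.
Proof. by rewrite trmxK; apply: orthT. Qed.

Lemma orthM n (P Q : 'M[R]_n) : P^T *m P = 1%:M -> Q^T *m Q = 1%:M ->
  (P *m Q)^T *m (P *m Q) = 1%:M.
Proof.
by move=> hP hQ; rewrite trmx_mul mulmxA -(mulmxA _ P^T) hP mulmx1 hQ.
Qed.

Lemma orth_block n (U : 'M[R]_n) : U^T *m U = 1%:M ->
  (block_mx 1%:M 0 0 U : 'M_(1 + n))^T *m block_mx 1%:M 0 0 U = 1%:M.
Proof.
move=> hU; rewrite tr_block_mx mulmx_block !trmx0 !mulmx0 !mul0mx !addr0 !add0r.
by rewrite trmx1 mulmx1 hU -scalar_mx_block.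
Qed.

Lemma diag11 (a : R) : diag_mx (a%:M : 'rV_1) = a%:M.
Proof. by apply/matrixP => i j; rewrite !ord1 !mxE. Qed.

Lemma block_step n (B1 : 'M[R]_(1 + n)) a (U' V' : 'M_n) s' :
  ursubmx B1 = 0 -> dlsubmx B1 = 0 -> ulsubmx B1 = a%:M ->
  drsubmx B1 = U' *m diag_mx s' *m V'^T ->
  B1 = block_mx 1%:M 0 0 U' *m diag_mx (row_mx a%:M s') *m (block_mx 1%:M 0 0 V')^T.
Proof.
move=> h1 h2 h3 h4; rewrite -[B1]submxK h1 h2 h3 h4 diag_mx_row diag11 tr_block_mx.
rewrite !trmx0 trmx1 !mulmx_block.
by rewrite !(mulmx0, mul0mx, mulmx1, mul1mx, addr0, add0r).
Qed.

Lemma sub_entries n (A1 : 'M[R]_(1 + n)) a :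
  A1^T = A1 -> (forall j, A1 0 j = a * ((0 : 'I_(1 + n)) == j)%:R) ->
  [/\ ursubmx A1 = 0, dlsubmx A1 = 0, ulsubmx A1 = a%:M & (drsubmx A1)^T = drsubmx A1].
Proof.
move=> sA1 r0.
have l0 : lshift n (0 : 'I_1) = 0 by apply/val_inj.
have ur : ursubmx A1 = 0.
  apply/matrixP => i j; rewrite !mxE ord1 l0 r0.
  by have -> : ((0 : 'I_(1 + n)) == rshift 1 j) = false by []; rewrite mulr0.
split => //.
- apply/matrixP => i j; rewrite -sA1 !mxE ord1 l0 r0.
  by have -> : ((0 : 'I_(1 + n)) == rshift 1 i) = false by []; rewrite mulr0.
- by apply/matrixP => i j; rewrite !mxE !ord1 l0 r0 eqxx mulr1.
- by rewrite trmx_drsub sA1.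
Qed.

Theorem spectral n (A : 'M[R]_n) : A^T = A ->
  exists V : 'M_n, exists d : 'rV_n, V^T *m V = 1%:M /\ A = V *m diag_mx d *m V^T.
Proof.
elim: n A => [|n IH] A sA.
  exists 1%:M, 0; split; first by rewrite trmx1 mulmx1.
  by apply/matrixP => [[]].
have [a /eigenvalueP [v va vn]] := sym_eigen sA.
have [t [tp uu]] := normalize vn.
set u := t *: v in uu.
have ua : u *m A = a *: u by rewrite /u -scalemxAl va !scalerA mulrC.
have [H [HH Hu]] := householder uu.
pose A1 : 'M_(1 + n) := H *m A *m H^T.
have HHt := orthT HH.
have row0 : row 0 A1 = a *: row 0 1%:M.
  by rewrite /A1 !row_mul Hu ua -scalemxAl -Hu -row_mul HHt.
have r0 : forall j, A1 0 j = a * ((0 : 'I_(1 + n)) == j)%:R.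
  by move=> j; move/rowP: row0 => /(_ j); rewrite !mxE.
have sA1 : A1^T = A1 by rewrite /A1 !trmx_mul trmxK sA mulmxA.
have [h1 h2 h3 h4] := sub_entries sA1 r0.
have [V' [d' [VV' eA']]] := IH _ h4.
have eA1 := block_step h1 h2 h3 eA'.
exists (H^T *m (block_mx 1%:M 0 0 V' : 'M_(1 + n))), (row_mx (a%:M : 'rV_1) d' : 'rV_(1 + n)); split.
  by apply: orthM; [apply: orth_tr | apply: orth_block].
have -> : A = H^T *m A1 *m H.
  by rewrite /A1 !mulmxA HH mul1mx -mulmxA HH mulmx1.
by rewrite eA1 trmx_mul trmxK !mulmxA.
Qed.

Lemma sub_entries2 n (A1 : 'M[R]_(1 + n)) a :
  (forall j, A1 0 j = a * ((0 : 'I_(1 + n)) == j)%:R) ->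
  (forall i, A1 i 0 = a * ((0 : 'I_(1 + n)) == i)%:R) ->
  [/\ ursubmx A1 = 0, dlsubmx A1 = 0 & ulsubmx A1 = a%:M].
Proof.
move=> r0 c0.
have l0 : lshift n (0 : 'I_1) = 0 by apply/val_inj.
split.
- apply/matrixP => i j; rewrite !mxE ord1 l0 r0.
  by have -> : ((0 : 'I_(1 + n)) == rshift 1 j) = false by []; rewrite mulr0.
- apply/matrixP => i j; rewrite !mxE ord1 l0 c0.
  by have -> : ((0 : 'I_(1 + n)) == rshift 1 i) = false by []; rewrite mulr0.
- by apply/matrixP => i j; rewrite !mxE !ord1 l0 r0 eqxx mulr1.
Qed.

Lemma row_mx_ge0 n (a : R) (s' : 'rV[R]_n) : 0 <= a -> (forall i, 0 <= s' 0 i) ->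
  forall i, 0 <= (row_mx (a%:M : 'rV_1) s' : 'rV_(1 + n)) 0 i.
Proof.
move=> a0 s0 i; rewrite -(splitK i); case: (split i) => k /=.
  by rewrite row_mxEl mxE ord1 eqxx mulr1n.
by rewrite row_mxEr.
Qed.

Theorem svd n (B : 'M[R]_n) : exists U V : 'M_n, exists s : 'rV_n,
  [/\ U^T *m U = 1%:M, V^T *m V = 1%:M, (forall i, 0 <= s 0 i) &
      B = U *m diag_mx s *m V^T].
Proof.
elim: n B => [|n IH] B.
  exists 1%:M, 1%:M, 0; split; rewrite ?trmx1 ?mulmx1 //; last by apply/matrixP => [[]].
  by move=> i; rewrite mxE.
have sS : (B^T *m B)^T = B^T *m B by rewrite trmx_mul trmxK.
have [mu /eigenvalueP [v0 va vn]] := sym_eigen sS.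
have [t0 [t0p vv]] := normalize vn.
set v := t0 *: v0 in vv.
have vS : v *m (B^T *m B) = mu *: v by rewrite /v -scalemxAl va !scalerA mulrC.
set y := v *m B^T.
have [sig [u [sig0 uu uB vB]]] : exists sig : R, exists u : 'rV_n.+1,
   [/\ 0 <= sig, u *m u^T = 1%:M, u *m B = sig *: v & v *m B^T = sig *: u].
  have [y0|yn] := eqVneq y 0.
    have vnz : v != 0.
      apply/eqP => v00; move: vv; rewrite v00 mul0mx => /matrixP /(_ 0 0).
      by rewrite !mxE eqxx /= => /eqP; rewrite eq_sym oner_eq0.
    have : \det B^T == 0 by apply/det0P; exists v.
    rewrite det_tr => /det0P [u0 u0n u0B].
    have [t1 [t1p uu]] := normalize u0n.
    exists 0, (t1 *: u0); split => //.
      by rewrite -scalemxAl u0B scaler0 scale0r.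
    by rewrite -/y y0 scale0r.
  have [t [tp uu]] := normalize yn.
  have yy : y *m y^T = mu%:M.
    by rewrite /y trmx_mul trmxK mulmxA -(mulmxA v) vS -scalemxAl vv scale_scalar_mx mulr1.
  have tmu : t * t * mu = 1.
    move: uu; rewrite linearZ /= -scalemxAl -scalemxAr yy scalerA scale_scalar_mx.
    by move/matrixP => /(_ 0 0); rewrite !mxE eqxx /= mulr1n.
  exists t^-1, (t *: y); split => //.
  - by rewrite invr_ge0 ltW.
  - rewrite -scalemxAl /y -mulmxA vS scalerA; congr (_ *: _).
    by rewrite -[t^-1]mulr1 -tmu; field; rewrite gt_eqF.
  - by rewrite scalerA mulVf ?gt_eqF // scale1r.
have [Hu [HHu Hu0]] := householder uu.
have [Hv [HHv Hv0]] := householder vv.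
pose B1 : 'M_(1 + n) := Hu *m B *m Hv^T.
have row0 : row 0 B1 = sig *: row 0 1%:M.
  by rewrite /B1 !row_mul Hu0 uB -scalemxAl -Hv0 -row_mul (orthT HHv).
have col0 : row 0 B1^T = sig *: row 0 1%:M.
  by rewrite /B1 !trmx_mul trmxK mulmxA !row_mul Hv0 vB -scalemxAl -Hu0 -row_mul (orthT HHu).
have r0 : forall j, B1 0 j = sig * ((0 : 'I_(1 + n)) == j)%:R.
  by move=> j; move/rowP: row0 => /(_ j); rewrite !mxE.
have c0 : forall i, B1 i 0 = sig * ((0 : 'I_(1 + n)) == i)%:R.
  by move=> i; move/rowP: col0 => /(_ i); rewrite !mxE.
have [h1 h2 h3] := sub_entries2 r0 c0.
have [U' [V' [s' [UU' VV' s0' eB']]]] := IH (drsubmx B1).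
have eB1 := block_step h1 h2 h3 eB'.
exists (Hu^T *m (block_mx 1%:M 0 0 U' : 'M_(1 + n))),
  (Hv^T *m (block_mx 1%:M 0 0 V' : 'M_(1 + n))),
  (row_mx (sig%:M : 'rV_1) s' : 'rV_(1 + n)); split.
- by apply: orthM; [apply: orth_tr | apply: orth_block].
- by apply: orthM; [apply: orth_tr | apply: orth_block].
- exact: row_mx_ge0.
have -> : B = Hu^T *m B1 *m Hv.
  by rewrite /B1 !mulmxA HHu mul1mx -mulmxA HHv mulmx1.
by rewrite eB1 trmx_mul trmxK !mulmxA.
Qed.

Lemma quad_diag n (w s : 'rV[R]_n) :
  (w *m diag_mx s *m w^T) 0 0 = \sum_i s 0 i * w 0 i ^+ 2.
Proof.
rewrite mul_mx_diag dotE; apply: eq_bigr => i _; rewrite mxE; ring.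
Qed.

Lemma polar n (B : 'M[R]_n) : exists Q : 'M_n,
  [/\ Q^T *m Q = 1%:M, (Q^T *m B)^T = Q^T *m B &
      forall u : 'rV_n, 0 <= (u *m (Q^T *m B) *m u^T) 0 0].
Proof.
have [U [V [s [UU VV s0 eB]]]] := svd B.
have eP : (U *m V^T)^T *m B = V *m diag_mx s *m V^T.
  by rewrite eB trmx_mul trmxK !mulmxA -(mulmxA V U^T) UU mulmx1.
exists (U *m V^T); split.
- by apply: orthM => //; apply: orth_tr.
- by rewrite eP !trmx_mul trmxK tr_diag_mx mulmxA.
- move=> u; rewrite eP !mulmxA -(mulmxA (u *m V *m diag_mx s)).
  have -> : V^T *m u^T = (u *m V)^T by rewrite trmx_mul.
  rewrite quad_diag; apply: sumr_ge0 => i _.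
  by rewrite mulr_ge0 ?sqr_ge0.
Qed.

Lemma rayleigh n (N : 'M[R]_n) lam : N^T = N ->
  (forall mu, eigenvalue N mu -> lam <= mu) ->
  forall u : 'rV_n, lam * (u *m u^T) 0 0 <= (u *m N *m u^T) 0 0.
Proof.
move=> sN hl u.
have [V [d [VV eN]]] := spectral sN.
have VVt := orthT VV.
have ev : forall i, lam <= d 0 i.
  move=> i; apply: hl; apply/eigenvalueP; exists (row i V^T).
    rewrite -row_mul; have -> : V^T *m N = diag_mx d *m V^T.
      by rewrite eN !mulmxA VV mul1mx.
    by rewrite row_mul; apply/rowP => j; rewrite !mxE (bigD1 i) //= big1 ?addr0 => [|k nk];
      rewrite !mxE ?eqxx ?mulr1n // eq_sym (negbTE nk) mulr0n mul0r.
  apply/eqP => r0; move: VV => /matrixP /(_ i i).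
  rewrite -[(V^T *m V) i i](_ : (row i V^T *m V) 0 i = _); last by rewrite -row_mul mxE.
  by rewrite r0 mul0mx !mxE eqxx /= => /eqP; rewrite eq_sym oner_eq0.
have -> : u *m N *m u^T = (u *m V) *m diag_mx d *m (u *m V)^T.
  by rewrite eN trmx_mul !mulmxA.
have -> : u *m u^T = (u *m V) *m (u *m V)^T.
  by rewrite trmx_mul mulmxA -(mulmxA u) VVt mulmx1.
rewrite quad_diag dotE mulr_sumr; apply: ler_sum => i _.
by rewrite -expr2 ler_wpM2r ?sqr_ge0.
Qed.

Lemma cyc4 d r (A : 'M[R]_(d, r)) (B : 'M_(r, d)) (C : 'M_(d, r)) (E : 'M_(r, d)) :
  \tr (A *m B *m (C *m E)) = \tr ((B *m C) *m (E *m A)).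
Proof. by rewrite -!mulmxA mxtrace_mulC !mulmxA. Qed.

Lemma tr_quad d r (D : 'M[R]_(d, r)) (P : 'M_r) :
  \tr (D *m P *m D^T) = \sum_i (row i D *m P *m (row i D)^T) 0 0.
Proof.
rewrite /mxtrace; apply: eq_bigr => i _.
have -> : (D *m P *m D^T) i i = (row i (D *m P) *m D^T) 0 i.
  by rewrite -row_mul [RHS]mxE.
by rewrite row_mul !mxE; apply: eq_bigr => k _; rewrite !mxE.
Qed.

Lemma tr_sq_ge0 d r (D : 'M[R]_(d, r)) : 0 <= \tr (D *m D^T).
Proof.
rewrite -[D in D *m _]mulmx1 tr_quad; apply: sumr_ge0 => i _.
by rewrite mulmx1 sq_ge0.
Qed.

Lemma tr_sq d r (D : 'M[R]_(d, r)) : \tr (D *m D^T) = \sum_i \sum_j D i j ^+ 2.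
Proof.
rewrite /mxtrace; apply: eq_bigr => i _; rewrite mxE; apply: eq_bigr => j _.
by rewrite mxE expr2.
Qed.

Lemma trD m n (A B : 'M[R]_(m, n)) : (A + B)^T = A^T + B^T.
Proof. by apply/matrixP => i j; rewrite !mxE. Qed.
Lemma trB m n (A B : 'M[R]_(m, n)) : (A - B)^T = A^T - B^T.
Proof. by apply/matrixP => i j; rewrite !mxE. Qed.
Lemma trZ m n a (A : 'M[R]_(m, n)) : (a *: A)^T = a *: A^T.
Proof. by apply/matrixP => i j; rewrite !mxE. Qed.

Lemma procrustes d r (X Y : 'M[R]_(d, r)) lam :
  (Y^T *m X)^T = Y^T *m X ->
  (forall u : 'rV_r, 0 <= (u *m (Y^T *m X) *m u^T) 0 0) ->
  (forall u : 'rV_r, lam * (u *m u^T) 0 0 <= (u *m (Y^T *m Y) *m u^T) 0 0) ->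
  2 * (Num.sqrt 2 - 1) * lam * \tr ((X - Y) *m (X - Y)^T)
   <= \tr ((X *m X^T - Y *m Y^T) *m (X *m X^T - Y *m Y^T)^T).
Proof.
move=> sP pP rN.
have [D eX] : exists D, X = Y + D by exists (X - Y); rewrite addrC subrK.
rewrite eX in sP pP *; clear eX X.
have -> : Y + D - Y = D by rewrite addrC addKr.
have eP : Y^T *m (Y + D) = Y^T *m Y + Y^T *m D by rewrite mulmxDr.
set S := Y^T *m D in eP *. set G := D^T *m D. set N := Y^T *m Y in eP *.
have sN : N^T = N by rewrite /N trmx_mul trmxK.
have sG : G^T = G by rewrite /G trmx_mul trmxK.
have sS : S^T = S.
  have -> : S = Y^T *m (Y + D) - N by rewrite eP [RHS]addrC addKr.
  by rewrite trB sP sN.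
have DS : D^T *m Y = S by rewrite -sS /S trmx_mul trmxK.
have eW : (Y + D) *m (Y + D)^T - Y *m Y^T = Y *m D^T + D *m Y^T + D *m D^T.
  rewrite trD !mulmxDl !mulmxDr.
  move: (Y *m Y^T) (Y *m D^T) (D *m Y^T) (D *m D^T) => a b c e.
  by rewrite addrAC [a + b]addrC addrK addrA.
have c4 := @cyc4 d r.
rewrite eW !trD !trmx_mul !trmxK !mulmxDl !mulmxDr !mxtraceD !c4 DS -/S -/G -/N.
rewrite (mxtrace_mulC G N) (mxtrace_mulC G S).
set sq2 := Num.sqrt 2.
have s2 : sq2 * sq2 = 2 by rewrite -expr2 sqr_sqrtr.
have s0 : 0 <= sq2 by apply: sqrtr_ge0.
have s1 : 1 <= sq2 by rewrite -sqrtr1 ler_sqrt // ler1n.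
have s22 : sq2 <= 2.
  by nra.
have hK := tr_sq_ge0 (G + sq2 *: S).
rewrite trD trZ sG sS mulmxDl !mulmxDr -!scalemxAl -!scalemxAr !mxtraceD !mxtraceZ in hK.
rewrite (mxtrace_mulC G S) mulrA s2 in hK.
have hp : 0 <= \tr (N *m G) + \tr (S *m G).
  rewrite -mxtraceD -mulmxDl -eP /G mulmxA mxtrace_mulC mulmxA tr_quad.
  by apply: sumr_ge0 => i _; apply: pP.
have hb : lam * \tr (D *m D^T) <= \tr (N *m G).
  rewrite /G mulmxA (mxtrace_mulC (N *m D^T) D) mulmxA tr_quad -[D in \tr (D *m _)]mulmx1 tr_quad mulr_sumr.
  by apply: ler_sum => i _; rewrite mulmx1; apply: rN.
move: hK hp hb; set a := \tr (S *m S); set b := \tr (N *m G); set c := \tr (S *m G);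
  set e := \tr (G *m G); set g := \tr (D *m D^T) => hK hp hb.
have h1 : 0 <= (4 - 2 * sq2) * (b + c) by rewrite mulr_ge0 // subr_ge0; lra.
have h2 : (2 * sq2 - 2) * (lam * g) <= (2 * sq2 - 2) * b by rewrite ler_wpM2l // subr_ge0; lra.
nra.
Qed.
End H.

Section Main.
Variable R : rcfType.

Lemma l1_step m (I : {set 'I_m}) (x s b : 'rV[R]_m) :
  (forall i, i \notin I -> b 0 i = s 0 i) ->
  l1_on (~: I) (x - s) - l1_on I (x - s) <=
  l1_on [set: 'I_m] (x - b) - l1_on [set: 'I_m] (s - b).
Proof.
move=> hb; rewrite /l1_on.
have fT : forall F : 'I_m -> R, \sum_(i < m | i \in [set: 'I_m]) F i =
    \sum_(i < m | i \in I) F i + \sum_(i < m | i \notin I) F i.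
  move=> F; rewrite (bigID (mem I)) /=; congr (_ + _); apply: eq_bigl => i; by rewrite in_setT.
rewrite !fT.
have e1 : \sum_(i < m | i \notin I) `|(s - b) 0 i| = 0.
  by rewrite big1 // => i hi; rewrite !mxE hb // subrr normr0.
have e2 : \sum_(i < m | i \in ~: I) `|(x - s) 0 i| = \sum_(i < m | i \notin I) `|(x - b) 0 i|.
  by apply: eq_big => i; rewrite ?in_setC // => hi; rewrite !mxE hb.
have e3 : \sum_(i < m | i \in I) `|(s - b) 0 i| - \sum_(i < m | i \in I) `|(x - s) 0 i|
    <= \sum_(i < m | i \in I) `|(x - b) 0 i|.
  rewrite -sumrB; apply: ler_sum => i _; rewrite !mxE lerBlDr.
  have -> : s 0 i - b 0 i = (x 0 i - b 0 i) - (x 0 i - s 0 i) by ring.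
  by apply: ler_normB.
rewrite e1 e2 addr0; lra.
Qed.

Lemma rank_W d r (X Xs : 'M[R]_(d, r)) : (\rank (X *m X^T - Xs *m Xs^T)%R <= 2 * r)%N.
Proof.
apply: leq_trans (mxrank_add _ _) _; rewrite mxrank_opp mul2n -addnn.
by apply: leq_add; apply: leq_trans (mxrankM_maxl _ _) (rank_leq_col _).
Qed.

Lemma frobE d r (W : 'M[R]_(d, r)) : frob W = Num.sqrt (\tr (W *m W^T)).
Proof. by rewrite /frob tr_sq. Qed.

End Main.

Theorem proposition4p6 (R : rcfType) (d r m : nat)
  (Xs : 'M[R]_(d, r)) (A : {linear 'M[R]_d -> 'rV[R]_m}) (b : 'rV[R]_m)
  (I : {set 'I_m}) (kappa3 : R) :
  \rank Xs = r ->
  0 < kappa3 ->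
  (forall i : 'I_m, i \notin I -> b 0 i = A (Xs *m Xs^T) 0 i) ->
  (forall W : 'M[R]_d, (\rank W <= 2 * r)%N ->
     kappa3 * frob W <= (m%:R)^-1 * l1_on (~: I) (A W) - (m%:R)^-1 * l1_on I (A W)) ->
  forall (X : 'M[R]_(d, r)) (sigma delta : R),
    is_sigma_r Xs sigma -> is_dist_Dstar Xs X delta ->
    fobj A b X - fobj A b Xs >=
      kappa3 * Num.sqrt (2 * (Num.sqrt 2 - 1)) * sigma * delta.
Proof.
move=> _ k0 hb hW X sigma delta [lam [evl [minl ->]]] [dlow dglb].
set W := X *m X^T - Xs *m Xs^T.
have step1 : kappa3 * frob W <= fobj A b X - fobj A b Xs.
  apply: le_trans (hW W (rank_W X Xs)) _.
  rewrite /fobj -!mulrBr ler_wpM2l ?invr_ge0 ?ler0n //.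
  have -> : A W = A (X *m X^T) - A (Xs *m Xs^T) by rewrite linearB.
  exact: l1_step.
have [Q [QQ sP pP]] := polar (Xs^T *m X).
set Y := Xs *m Q.
have YX : Y^T *m X = Q^T *m (Xs^T *m X) by rewrite /Y trmx_mul mulmxA.
have YY : Y *m Y^T = Xs *m Xs^T.
  by rewrite /Y trmx_mul mulmxA -(mulmxA Xs) (orthT QQ) mulmx1.
have sN : (Xs^T *m Xs)^T = Xs^T *m Xs by rewrite trmx_mul trmxK.
have rN := rayleigh sN minl.
have rY : forall u : 'rV_r, lam * (u *m u^T) 0 0 <= (u *m (Y^T *m Y) *m u^T) 0 0.
  move=> u; have := rN (u *m Q^T).
  by rewrite !trmx_mul trmxK !mulmxA -(mulmxA u Q^T Q) QQ mulmx1.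
have hP := procrustes (X := X) (Y := Y) (lam := lam).
rewrite YX YY in hP; have {hP} hP := hP sP pP rY.
have lam0 : 0 <= lam.
  move/eigenvalueP: evl => [v vN vn].
  have : (v *m (Xs^T *m Xs) *m v^T) 0 0 = lam * (v *m v^T) 0 0.
    by rewrite vN -scalemxAl mxE.
  have -> : v *m (Xs^T *m Xs) *m v^T = (v *m Xs^T) *m (v *m Xs^T)^T.
    by rewrite trmx_mul trmxK !mulmxA.
  have vp : 0 < (v *m v^T) 0 0.
    by rewrite lt_def sq_ge0 andbT; apply/eqP => /sq_eq0 h; rewrite h eqxx in vn.
  move=> e; rewrite -(pmulr_lge0 _ vp) -e; exact: sq_ge0.
have d0 : 0 <= delta by apply: dglb => Q' _; apply: sqrtr_ge0.
have dle := dlow Q QQ.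
set T := \tr ((X - Y) *m (X - Y)^T) in hP.
have c1 : 0 <= Num.sqrt 2 - 1 :> R.
  rewrite subr_ge0; apply: (@le_trans _ _ (Num.sqrt 1)).
    by rewrite sqrtr1.
  by apply: ler_wsqrtr; rewrite ler1n.
have c0 : 0 <= 2 * (Num.sqrt 2 - 1) :> R by apply: mulr_ge0.
suff h : Num.sqrt (2 * (Num.sqrt 2 - 1)) * Num.sqrt lam * delta <= frob W.
  apply: le_trans step1; rewrite -!mulrA ler_wpM2l ?(ltW k0) //.
  by rewrite !mulrA.
apply: (@le_trans _ _ (Num.sqrt (2 * (Num.sqrt 2 - 1)) * Num.sqrt lam * frob (X - Y))).
  by rewrite ler_wpM2l // mulr_ge0 // sqrtr_ge0.
rewrite !frobE -/T -!sqrtrM ?mulr_ge0 //.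
by apply: ler_wsqrtr; apply: hP.
Qed.
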